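(* Let $P\ge 1$, $m\ge 2$, $y\in\mathbb{R}^P$, $z_1,\dots,z_m\in\mathbb{R}^P$, $Z=[z_1,\dots,z_m]$, $d=(d_1,\dots,d_m)^{\mathsf T}$ with all $d_j>0$, $D=\operatorname{diag}(d)$, $\lambda>0$ and $\rho\in\mathbb{R}$. Assume $d_j>d_1$ for all $j\in\{2,\dots,m\}$ (as is the case when $z_1$ is the unique nearest neighbour of $y$ and the weights are strictly increasing with distance to $y$). Let $$f(\beta)=\tfrac12\,\beta^{\mathsf T}\big(Z^{\mathsf T}Z+\lambda D^{\mathsf T}D\big)\beta+\big(\rho\, d-Z^{\mathsf T}y\big)^{\mathsf T}\beta .$$ If $$\rho>\max_{j\in\{2,\dots,m\}}\frac{(z_1-z_j)^{\mathsf T}(z_1-y)+\lambda d_1^2}{d_j-d_1},$$ then $e_1=(1,0,\dots,0)^{\mathsf T}$ is the (unique) minimiser of $f$ over the unit simplex $\Delta^m=\{\beta\in\mathbb{R}^m:\beta\ge 0,\ \beta^{\mathsf T}\mathbf 1=1\}$. *)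

(* Defs.v *)
From HB Require Import structures.
From mathcomp Require Import all_boot all_order all_algebra.
Set Implicit Arguments. Unset Strict Implicit. Unset Printing Implicit Defensive.
Import Order.TTheory GRing.Theory Num.Theory.
Local Open Scope ring_scope.

Definition unit_simplex (R : numDomainType) (m : nat) (b : 'cV[R]_m) : Prop :=
  (forall i, 0 <= b i 0) /\ \sum_(i < m) b i 0 = 1.

Definition obj (R : numFieldType) (P m : nat) (Z : 'M[R]_(P, m)) (y : 'cV[R]_P)
    (d : 'cV[R]_m) (lam rho : R) (b : 'cV[R]_m) : R :=
  let D := diag_mx d^T in
  (2^-1 *: (b^T *m (Z^T *m Z + lam *: (D^T *m D)) *m b)
   + (rho *: d - Z^T *m y)^T *m b) 0 0.

Definition ebasis (R : numDomainType) (m : nat) (i : 'I_m) : 'cV[R]_m :=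
  \col_(k < m) (if k == i then 1 else 0).

(* Main.v *)
Require Import Defs.
From HB Require Import structures.
From mathcomp Require Import all_boot all_order all_algebra.
From mathcomp Require Import ring lra.
Import Order.TTheory GRing.Theory Num.Theory.
Local Open Scope ring_scope.

Lemma tD (R : numFieldType) m n (A B : 'M[R]_(m,n)) : (A+B)^T = A^T + B^T.
Proof. by apply/matrixP=> i j; rewrite !mxE. Qed.
Lemma tZ (R : numFieldType) m n (a : R) (A : 'M[R]_(m,n)) : (a *: A)^T = a *: A^T.
Proof. by apply/matrixP=> i j; rewrite !mxE. Qed.

Lemma quad_split (R : numFieldType) n (H : 'M[R]_n) (c a u : 'cV[R]_n) : H^T = H ->
  (2^-1 *: ((a+u)^T *m H *m (a+u)) + c^T *m (a+u)) 0 0 =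
  (2^-1 *: (a^T *m H *m a) + c^T *m a) 0 0 + ((H *m a + c)^T *m u) 0 0
   + 2^-1 * (u^T *m H *m u) 0 0.
Proof.
move=> HT.
have E : (u^T *m H *m a) 0 0 = (a^T *m H *m u) 0 0.
  have -> : (u^T *m H *m a) 0 0 = ((u^T *m H *m a)^T) 0 0 by rewrite [in RHS]mxE.
  by rewrite trmx_mul trmx_mul trmxK HT mulmxA.
rewrite tD mulmxDl mulmxDr mulmxDr mulmxDl mulmxDl.
rewrite tD mulmxDl trmx_mul HT.
move: E.
set x1 := a^T *m H *m a. set x2 := a^T *m H *m u. set x3 := u^T *m H *m a.
set x4 := u^T *m H *m u. set y1 := c^T *m a. set y2 := c^T *m u.
rewrite !mxE => ->.
by field.
Qed.

Lemma sqn (R : numFieldType) n (v : 'cV[R]_n) : (v^T *m v) 0 0 = \sum_k v k 0 ^+ 2.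
Proof. by rewrite mxE; apply: eq_bigr => k _; rewrite mxE expr2. Qed.

Lemma mul_e (R : numFieldType) m n (M : 'M[R]_(m,n.+1)) j :
  (M *m ebasis R ord0) j 0 = M j ord0.
Proof.
rewrite mxE (bigD1 ord0) //= mxE eqxx mulr1 big1 ?addr0 // => i /negbTE ni.
by rewrite mxE ni mulr0.
Qed.

Lemma mxDE (R : numFieldType) m n (A B : 'M[R]_(m,n)) i j : (A + B) i j = A i j + B i j.
Proof. by rewrite mxE. Qed.
Lemma mxNE (R : numFieldType) m n (A : 'M[R]_(m,n)) i j : (- A) i j = - A i j.
Proof. by rewrite mxE. Qed.
Lemma mxZE (R : numFieldType) m n (a : R) (A : 'M[R]_(m,n)) i j : (a *: A) i j = a * A i j.
Proof. by rewrite mxE. Qed.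
Lemma trmulE (R : numFieldType) m n p (A : 'M[R]_(m,n)) (B : 'M[R]_(m,p)) k l :
  (A^T *m B) k l = \sum_i A i k * B i l.
Proof. by rewrite mxE; apply: eq_bigr => i _; rewrite mxE. Qed.

Theorem proposition2 (R : realFieldType) (P m : nat)
  (y : 'cV[R]_P.+1) (Z : 'M[R]_(P.+1, m.+2)) (d : 'cV[R]_m.+2) (lam rho : R) :
  (forall j, 0 < d j 0) ->
  0 < lam ->
  (forall j : 'I_m.+2, j != ord0 -> d ord0 0 < d j 0) ->
  (forall j : 'I_m.+2, j != ord0 ->
     (((col ord0 Z - col j Z)^T *m (col ord0 Z - y)) 0 0 + lam * d ord0 0 ^+ 2)
       / (d j 0 - d ord0 0) < rho) ->
  unit_simplex (ebasis R (ord0 : 'I_m.+2)) /\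
  (forall b : 'cV[R]_m.+2, unit_simplex b -> b != ebasis R ord0 ->
     obj Z y d lam rho (ebasis R ord0) < obj Z y d lam rho b).
Proof.
move=> dpos lpos dlt hrho.
set e := ebasis R ord0.
have eE : forall k, e k 0 = (k == ord0)%:R by move=> k; rewrite mxE; case: eqP.
split.
  split; first by move=> i; rewrite eE ler0n.
  rewrite (bigD1 ord0) //= eE eqxx big1 ?addr0 // => i /negbTE ni.
  by rewrite eE ni.
move=> b [b0 b1] bne.
set D := diag_mx d^T. set H := Z^T *m Z + lam *: (D^T *m D).
set c := rho *: d - Z^T *m y.
have objE : forall v, obj Z y d lam rho v = (2^-1 *: (v^T *m H *m v) + c^T *m v) 0 0 by move=> v; rewrite /obj /=.
have HT : H^T = H by rewrite /H tD tZ !trmx_mul !trmxK.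
have Hb : b = e + (b - e) by rewrite addrC subrK.
rewrite !objE Hb (@quad_split _ _ H c e (b - e) HT).
set u := b - e.
have uE : forall k, u k 0 = b k 0 - e k 0 by move=> k; rewrite /u !mxE.
have DE : forall k l, (D^T *m D) k l = d k 0 * (d k 0 *+ (k == l)).
  by move=> k l; rewrite /D tr_diag_mx mul_diag_mx !mxE.
have QE : (u^T *m H *m u) 0 0 =
    \sum_k (Z *m u) k 0 ^+ 2 + lam * \sum_k (d k 0 * u k 0) ^+ 2.
  have E1 : u^T *m (Z^T *m Z) *m u = (Z *m u)^T *m (Z *m u) by rewrite trmx_mul !mulmxA.
  have E2 : u^T *m (D^T *m D) *m u = (D *m u)^T *m (D *m u) by rewrite trmx_mul !mulmxA.
  rewrite /H mulmxDr mulmxDl -scalemxAr -scalemxAl E1 E2 mxDE mxZE !sqn.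
  congr (_ + lam * _); apply: eq_bigr => k _.
  by rewrite /D mul_diag_mx !mxE.
have [j uj] : exists j, u j 0 != 0.
  case: (boolP [exists j, u j 0 != 0]) => [/existsP//|].
  rewrite negb_exists => /forallP allz.
  case/negP: bne; apply/eqP/matrixP => i k; rewrite (ord1 k).
  by have := allz i; rewrite negbK uE subr_eq0 => /eqP.
have Qpos : 0 < (u^T *m H *m u) 0 0.
  rewrite QE.
  have s1 : 0 <= \sum_k (Z *m u) k 0 ^+ 2 by apply: sumr_ge0 => k _; exact: sqr_ge0.
  have s2 : 0 <= \sum_(k | k != j) (d k 0 * u k 0) ^+ 2 by apply: sumr_ge0 => k _; exact: sqr_ge0.
  have t : 0 < (d j 0 * u j 0) ^+ 2.
    by rewrite lt_def sqrf_eq0 mulf_neq0 ?sqr_ge0 ?uj ?(gt_eqF (dpos j)).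
  rewrite (bigD1 j) /=; last by [].
  set s3 := \sum_(k | k != j) _ in s2 *.
  set s4 := \sum_k _ in s1 *.
  set t1 := _ ^+ 2 in t *.
  nra.
set g := H *m e + c.
have gE : forall k, g k 0 = \sum_i Z i k * Z i ord0 + lam * (d k 0 * (d k 0 *+ (k == ord0)))
    + (rho * d k 0 - \sum_i Z i k * y i 0).
  by move=> k; rewrite /g mxDE mul_e /H mxDE mxZE DE trmulE /c mxDE mxNE mxZE trmulE.
have gpos : forall k, k != ord0 -> 0 < g k 0 - g ord0 0.
  move=> k kn; have := hrho k kn.
  rewrite ltr_pdivrMr ?subr_gt0 ?dlt //.
  have -> : ((col ord0 Z - col k Z)^T *m (col ord0 Z - y)) 0 0 =
     \sum_i Z i ord0 * Z i ord0 - \sum_i Z i ord0 * y i 0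
     - \sum_i Z i k * Z i ord0 + \sum_i Z i k * y i 0.
    rewrite -!sumrB -big_split /= trmulE; apply: eq_bigr => i _; rewrite !mxE; ring.
  rewrite !gE eqxx (negbTE kn) mulr0n mulr1n mulr0.
  nra.
have Gnn : 0 <= (g^T *m u) 0 0.
  rewrite trmulE big_ord_recl uE eE eqxx.
  rewrite big_ord_recl in b1.
  have -> : \sum_(i < m.+1) g (lift ord0 i) 0 * u (lift ord0 i) 0 =
            \sum_(i < m.+1) g (lift ord0 i) 0 * b (lift ord0 i) 0.
    apply: eq_bigr => i _; rewrite uE eE.
    have -> : (lift ord0 i == ord0) = false by rewrite eq_sym (negbTE (neq_lift _ _)).
    by rewrite subr0.
  have : 0 <= \sum_(i < m.+1) (g (lift ord0 i) 0 - g ord0 0) * b (lift ord0 i) 0.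
    apply: sumr_ge0 => i _; apply: mulr_ge0 => //.
    by apply: ltW; apply: gpos; rewrite eq_sym neq_lift.
  rewrite (eq_bigr (fun i => g (lift ord0 i) 0 * b (lift ord0 i) 0 - g ord0 0 * b (lift ord0 i) 0));
    last by move=> i _; rewrite mulrBl.
  rewrite sumrB -mulr_sumr.
  set S1 := \sum_(i < m.+1) _ * _.
  set S2 := \sum_(i < m.+1) _.
  have hb : b ord0 0 = 1 - S2 by rewrite -b1 addrK.
  have T1 : (true%:R : R) = 1 by [].
  rewrite hb T1. nra.
have Hp : 0 < 2^-1 * (u^T *m H *m u) 0 0 by rewrite mulr_gt0 ?invr_gt0 ?ltr0n.
lra.
Qed.
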